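(* Let $(R,\mathfrak m)$ be a zero-dimensional Gorenstein local ring and let $I\subseteq\mathfrak m$ be an ideal with $I^r\ne0$ and $I^{r+1}=0$. If the associated graded ring $G(I)=\bigoplus_{i\ge0}I^i/I^{i+1}$ is Gorenstein, then $I^i/I^{i+1}$ is a faithful $(R/I)$-module for $0\le i\le r$. *)

(* Defs.v *)
From HB Require Import structures.
From mathcomp Require Import all_boot all_algebra.
From mathcomp Require Import boolp.

Set Implicit Arguments.
Unset Strict Implicit.
Unset Printing Implicit Defensive.

Import GRing.Theory.
Local Open Scope ring_scope.
Local Open Scope quotient_scope.

Section CommAlg.
Variable S : comPzRingType.

Definition is_ideal (A : S -> Prop) : Prop :=
  [/\ A 0, (forall x y, A x -> A y -> A (x + y)) & (forall a x, A x -> A (a * x))].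

Definition proper_ideal (A : S -> Prop) : Prop := is_ideal A /\ ~ A 1.

Definition maximal_ideal (A : S -> Prop) : Prop :=
  proper_ideal A /\
  forall B, proper_ideal B -> (forall x, A x -> B x) -> forall x, B x -> A x.

Definition prime_ideal (A : S -> Prop) : Prop :=
  proper_ideal A /\ forall x y, A (x * y) -> A x \/ A y.

Definition noetherian : Prop :=
  forall C : nat -> S -> Prop, (forall n, is_ideal (C n)) ->
    (forall n x, C n x -> C n.+1 x) ->
    exists N, forall n, (N <= n)%N -> forall x, C n x -> C N x.

Definition zero_dimensional : Prop :=
  forall P, prime_ideal P -> maximal_ideal P.

Definition local_ring (m : S -> Prop) : Prop :=
  maximal_ideal m /\ forall n, maximal_ideal n -> forall x, n x <-> m x.

Definition socle (m : S -> Prop) : S -> Prop :=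
  fun x => forall y, m y -> y * x = 0.

(** the socle is a one-dimensional S/m-vector space *)
Definition socle_dim1 (m : S -> Prop) : Prop :=
  (exists s, socle m s /\ s <> 0) /\
  forall s t, socle m s -> socle m t -> s <> 0 -> exists a, t = a * s.

(** zero-dimensional (Noetherian) Gorenstein local ring with maximal ideal m:
    an Artinian local ring of type 1 *)
Definition gorenstein_zero_dim_local (m : S -> Prop) : Prop :=
  [/\ noetherian, zero_dimensional, local_ring m & socle_dim1 m].

Definition gorenstein_zero_dim : Prop := exists m, gorenstein_zero_dim_local m.

End CommAlg.

Section Powers.
Variable R : comPzRingType.
Variable I : R -> Prop.

Fixpoint prods (n : nat) : R -> Prop :=
  match n with
  | 0 => fun x => x = 1
  | n'.+1 => fun x => exists y z, [/\ prods n' y, I z & x = y * z]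
  end.

Definition idealpow (n : nat) : R -> Prop :=
  fun x => forall K, is_ideal K -> (forall y, prods n y -> K y) -> K x.

Lemma idealpow_ideal n : is_ideal (idealpow n).
Proof.
split.
- by move=> K [K0 _ _] _.
- by move=> x y hx hy K hK hP; case: (hK) => _ hD _; apply: hD; [apply: hx|apply: hy].
- by move=> a x hx K hK hP; case: (hK) => _ _ hM; apply: hM; apply: hx.
Qed.

Lemma idealpow_0 n : idealpow n 0.
Proof. by case: (idealpow_ideal n). Qed.

Lemma idealpowD n x y : idealpow n x -> idealpow n y -> idealpow n (x + y).
Proof. by case: (idealpow_ideal n) => _ hD _; apply: hD. Qed.

Lemma idealpowN n x : idealpow n x -> idealpow n (- x).
Proof. by move=> hx; rewrite -mulN1r; case: (idealpow_ideal n) => _ _; apply. Qed.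

Lemma idealpowB n x y : idealpow n x -> idealpow n y -> idealpow n (x - y).
Proof. by move=> hx hy; apply: idealpowD => //; apply: idealpowN. Qed.

Lemma idealpow0 x : idealpow 0 x.
Proof. by move=> K [_ _ hM] hP; rewrite -[x]mulr1; apply: hM; exact: hP. Qed.

Lemma prodsM i j x y : prods i x -> prods j y -> prods (i + j)%N (x * y).
Proof.
move=> hx; elim: j y => [|j IH] y /=.
  by move=> ->; rewrite addn0 mulr1.
move=> [y' [z [hy' hz ->]]]; rewrite addnS /=.
by exists (x * y'), z; split; [exact: IH|exact: hz|rewrite mulrA].
Qed.

Lemma idealpowM i j x y : idealpow i x -> idealpow j y -> idealpow (i + j)%N (x * y).
Proof.
move=> hx hy K hK hP; have [K0 KD KM] := hK.
pose K1 := fun a => forall b, prods j b -> K (a * b).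
have hK1 : is_ideal K1.
  split.
  - by move=> b _; rewrite mul0r.
  - by move=> a a' ha ha' b hb; rewrite mulrDl; apply: KD; [apply: ha|apply: ha'].
  - by move=> c a ha b hb; rewrite -mulrA; apply: KM; apply: ha.
have hx1 : K1 x by apply: hx => // a ha b hb; apply: hP; exact: prodsM.
pose K2 := fun b => K (x * b).
have hK2 : is_ideal K2.
  split.
  - by rewrite /K2 mulr0.
  - by move=> b b' hb hb'; rewrite /K2 mulrDr; apply: KD.
  - by move=> c b hb; rewrite /K2 mulrCA; apply: KM.
exact: (hy K2 hK2 hx1).
Qed.

End Powers.

(** * The associated graded ring G(I) = R[It] / I R[It] *)
Section AssocGraded.
Variable R : comNzRingType.
Variable I : R -> Prop.

Definition reesP : {pred {poly R}} := fun p => `[< forall i, idealpow I i p`_i >].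

Lemma rees_subring_closed : subring_closed reesP.
Proof.
split.
- apply/asboolP => i; rewrite coef1; case: i => [|i]; first exact: idealpow0.
  by rewrite mulr0n; apply: idealpow_0.
- move=> p q /asboolP hp /asboolP hq; apply/asboolP => i; rewrite coefB.
  exact: idealpowB.
- move=> p q /asboolP hp /asboolP hq; apply/asboolP => i; rewrite coefM.
  apply: (big_ind (idealpow I i)); [exact: idealpow_0|exact: idealpowD|].
  move=> j _; have := idealpowM (hp j) (hq (i - j)%N).
  by rewrite subnKC // -ltnS.
Qed.

Record rees_algebra := ReesElt { rees_val : {poly R}; rees_valP : rees_val \in reesP }.

HB.instance Definition _ := [isSub for rees_val].
HB.instance Definition _ := [Choice of rees_algebra by <:].
HB.instance Definition _ :=
  GRing.SubChoice_isSubComNzRing.Build _ _ rees_algebra rees_subring_closed.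

(** the ideal I R[It] = { sum a_i t^i | a_i \in I^(i+1) } of R[It] *)
Definition grJ : {pred rees_algebra} :=
  fun p => `[< forall i, idealpow I i.+1 (rees_val p)`_i >].

Lemma grJ_zmod_closed : zmod_closed grJ.
Proof.
split.
- by apply/asboolP => i /=; rewrite coef0; apply: idealpow_0.
- move=> p q /asboolP hp /asboolP hq; apply/asboolP => i.
  rewrite (_ : rees_val (p - q) = rees_val p - rees_val q) // coefB.
  exact: idealpowB.
Qed.

HB.instance Definition _ := GRing.isZmodClosed.Build _ grJ grJ_zmod_closed.

Lemma grJM (a u : rees_algebra) : u \in grJ -> a * u \in grJ.
Proof.
move=> /asboolP hu; apply/asboolP => i; rewrite (_ : rees_val (a * u) = rees_val a * rees_val u) // coefM.
have /asboolP ha := rees_valP a.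
apply: (big_ind (idealpow I i.+1)); [exact: idealpow_0|exact: idealpowD|].
move=> j _; have := idealpowM (ha j) (hu (i - j)%N).
by rewrite addnS subnKC // -ltnS.
Qed.

Definition assoc_graded := Quotient.quot grJ.

Local Notation Q := assoc_graded.
HB.instance Definition _ := GRing.Zmodule.on Q.
HB.instance Definition _ := EqQuotient.on Q.

Definition gr_one : Q := lift_cst Q 1.
Definition gr_mul := lift_op2 Q *%R.

Canonical gr_pi_one_morph := PiConst gr_one.

Lemma gr_pi_mul : {morph \pi : x y / x * y >-> gr_mul x y}.
Proof.
move=> x y; unlock gr_mul; apply/eqP; rewrite piE Quotient.equivE.
rewrite -[_ * _](addrNK (x * repr (\pi_Q y))) -mulrBr.
rewrite -addrA -mulrBl rpredD //.
  by apply: grJM; rewrite Quotient.idealrDE opprK reprK.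
by rewrite mulrC; apply: grJM; rewrite Quotient.idealrDE opprK reprK.
Qed.
Canonical gr_pi_mul_morph := PiMorph2 gr_pi_mul.

Lemma gr_mulA : associative gr_mul.
Proof. by move=> x y z; rewrite -[x]reprK -[y]reprK -[z]reprK !piE mulrA. Qed.

Lemma gr_mulC : commutative gr_mul.
Proof. by move=> x y; rewrite -[x]reprK -[y]reprK !piE mulrC. Qed.

Lemma gr_mul1 : left_id gr_one gr_mul.
Proof. by move=> x; rewrite -[x]reprK !piE mul1r. Qed.

Lemma gr_mulDl : left_distributive gr_mul +%R.
Proof.
move=> x y z; rewrite -[x]reprK -[y]reprK -[z]reprK.
by rewrite !piE mulrDl.
Qed.

HB.instance Definition _ :=
  GRing.Zmodule_isComPzRing.Build Q gr_mulA gr_mulC gr_mul1 gr_mulDl.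

End AssocGraded.

(** I^i / I^(i+1) is a faithful R/I-module: its annihilator in R is exactly I
    (the inclusion I \subseteq ann always holds) *)
Definition faithful_graded_piece (R : comPzRingType) (I : R -> Prop) (i : nat) : Prop :=
  forall a : R, (forall x, idealpow I i x -> idealpow I i.+1 (a * x)) -> I a.

(* Main.v *)
Require Import Defs.
From HB Require Import structures.
From mathcomp Require Import all_boot all_algebra.
From mathcomp Require Import boolp.
From Stdlib Require Import Classical.
Import GRing.Theory.
Local Open Scope ring_scope.
Local Open Scope quotient_scope.

Section Pow.
Variable R : comPzRingType.
Variable I : R -> Prop.
Hypothesis hI : is_ideal I.

Lemma prods_in n y : prods I n y -> idealpow I n y.
Proof. by move=> hy K _; apply. Qed.

Lemma prods_le n y k : prods I n y -> (k <= n)%N -> idealpow I k y.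
Proof.
elim: n y k => [|n IH] y k /=.
  by rewrite leqn0 => -> /eqP ->; apply: idealpow0.
move=> [y' [z [hy' hz ey]]] hk; case: (ltngtP k n.+1) hk => // [hk _|-> _].
  have := IH _ _ hy' hk; rewrite ey mulrC; case: (idealpow_ideal I k) => _ _; apply.
by apply: prods_in; exists y', z.
Qed.

Lemma idealpow_mono n k x : idealpow I n x -> (k <= n)%N -> idealpow I k x.
Proof. by move=> hx hk; apply: hx; [exact: idealpow_ideal|move=> y hy; exact: prods_le hy hk]. Qed.

Lemma prods_split i k y : prods I (i + k) y ->
  exists y1 y2, [/\ prods I i y1, prods I k y2 & y = y1 * y2].
Proof.
elim: k y => [|k IH] y; first by rewrite addn0 => hy; exists y, 1; rewrite mulr1.
rewrite addnS /= => -[y' [z [hy' hz ->]]].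
have [y1 [y2 [h1 h2 ->]]] := IH _ hy'.
by exists y1, (y2 * z); split => //; [exists y2, z|rewrite mulrA].
Qed.

Lemma idealpow1I x : idealpow I 1 x -> I x.
Proof.
move=> hx; apply: hx => // y [y' [z [-> hz ->]]] /=.
by rewrite mul1r.
Qed.
End Pow.
Section Gen.
Variable S : comPzRingType.

Lemma max_elt (F : (S -> Prop) -> Prop) : noetherian S ->
  (forall P, F P -> is_ideal P) -> (exists P, F P) ->
  exists P, F P /\ forall Q, F Q -> (forall x, P x -> Q x) -> forall x, Q x -> P x.
Proof.
move=> hN hFI hF; apply: NNPP => H.
have step : forall P : {P | F P}, exists Q : {Q | F Q},
    (forall x, sval P x -> sval Q x) /\ exists x, sval Q x /\ ~ sval P x.
  move=> [P FP]; apply: NNPP => H2; apply: H; exists P; split => // Q FQ sub x Qx.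
  apply: NNPP => nPx; apply: H2; exists (exist _ Q FQ); split => //.
  by exists x.
pose f P := sval (cid (step P)).
have [P0 FP0] := cid hF.
pose C n := sval (iter n f (exist _ P0 FP0)).
have CS n : C n.+1 = sval (f (iter n f (exist _ P0 FP0))) by [].
have incl n x : C n x -> C n.+1 x.
  by move=> Cx; have [hQ _] := svalP (cid (step (iter n f (exist _ P0 FP0)))); exact: hQ.
have [N HN] := hN C (fun n => hFI _ (svalP (iter n f (exist _ P0 FP0)))) incl.
have h := HN N.+1 (leqnSn N).
have [_ [x [Qx nPx]]] := svalP (cid (step (iter N f (exist _ P0 FP0)))).
by apply: nPx; apply: h.
Qed.


Lemma nilp_of_m (m : S -> Prop) : noetherian S -> zero_dimensional S -> local_ring m ->
  forall x, m x -> exists n, x ^+ n = 0.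
Proof.
move=> hN hZ [hm hloc] x mx; apply: NNPP => H.
have nz n : x ^+ n <> 0 by move=> h; apply: H; exists n.
pose F P := is_ideal P /\ forall n, ~ P (x ^+ n).
have [P [[PI Pn] Pmax]] : exists P, F P /\ forall Q, F Q -> (forall x, P x -> Q x) -> forall x, Q x -> P x.
  apply: max_elt => //; first by move=> P [].
  exists (fun z => z = 0); split; last by move=> n; apply: nz.
  split => //; first by move=> ? ? -> ->; rewrite addr0.
  by move=> a ? ->; rewrite mulr0.
have [P0 PD PM] := PI.
have gen y : ~ P y -> exists n p g, P p /\ x ^+ n = p + g * y.
  move=> nPy; apply: NNPP => hne.
  pose Q z := exists p g, P p /\ z = p + g * y.
  have QI : is_ideal Q.
    split.
    - by exists 0, 0; rewrite mul0r addr0.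
    - move=> z1 z2 [p1 [g1 [h1 ->]]] [p2 [g2 [h2 ->]]]; exists (p1 + p2), (g1 + g2).
      by split; [apply: (PD)|rewrite mulrDl addrACA].
    - move=> a z [p1 [g1 [h1 ->]]]; exists (a * p1), (a * g1).
      by split; [apply: (PM)|rewrite mulrDr mulrA].
  have FQ : F Q.
    by split => // n [p [g [hp e]]]; apply: hne; exists n, p, g.
  apply: nPy; apply: (Pmax Q FQ) => [z Pz|]; first by exists z, 0; rewrite mul0r addr0.
  by exists 0, 1; rewrite add0r mul1r.
have prP : prime_ideal P.
  split; first by split => //; rewrite -(expr0 x); apply: Pn.
  move=> y z Pyz; apply: NNPP => hn.
  have [ny nz'] : ~ P y /\ ~ P z by split => h; apply: hn; [left|right].
  have [a [p [g [hp ea]]]] := gen y ny.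
  have [b [p' [g' [hp' eb]]]] := gen z nz'.
  have hab : P (x ^+ (a + b)).
    rewrite exprD ea eb mulrDl !mulrDr.
    apply: (PD); first by apply: (PD); [apply: (PM)|rewrite mulrC; apply: (PM)].
    apply: (PD); first by apply: (PM).
    by rewrite mulrACA; apply: (PM).
  exact: (Pn _ hab).
have := (hloc P (hZ P prP) x).2 mx => Px.
by apply: (Pn 1%N); rewrite expr1.
Qed.


Lemma socle_in (m : S -> Prop) : noetherian S -> zero_dimensional S -> local_ring m ->
  forall y : S, y <> 0 -> exists g, socle m (g * y) /\ g * y <> 0.
Proof.
move=> hN hZ hL y y0.
pose F P := is_ideal P /\ exists g, g * y <> 0 /\ forall u, P u <-> u * (g * y) = 0.
have annI z : is_ideal (fun u => u * z = 0).
  split; first by rewrite mul0r.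
    by move=> a b ha hb; rewrite mulrDl ha hb addr0.
  by move=> a b hb; rewrite -mulrA hb mulr0.
have [P [[PI [g [gy0 hP]]] Pmax]] : exists P, F P /\ forall Q, F Q -> (forall x, P x -> Q x) -> forall x, Q x -> P x.
  apply: max_elt => //; first by move=> P [].
  exists (fun u => u * y = 0); split; first exact: annI.
  by exists 1; rewrite mul1r; split.
exists g; split => // u mu; apply: NNPP => uz.
have key n : u ^+ n.+1 * (g * y) <> 0.
  elim: n => [|n IH]; first by rewrite expr1.
  have FQ : F (fun v => v * (u ^+ n.+1 * (g * y)) = 0).
    split; first exact: annI.
    by exists (u ^+ n.+1 * g); split; [rewrite -mulrA|move=> v; rewrite -mulrA].
  have sub : forall v, P v -> v * (u ^+ n.+1 * (g * y)) = 0.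
    by move=> v /hP hv; rewrite mulrCA hv mulr0.
  move=> h; apply: uz; apply/hP; apply: (Pmax _ FQ sub).
  by rewrite mulrA -exprS.
have [N hN'] := @nilp_of_m m hN hZ hL u mu.
by apply: (key N); rewrite exprS hN' mulr0 mul0r.
Qed.

End Gen.

Section G.
Variable R : comNzRingType.
Variable I : R -> Prop.
Local Notation G := (assoc_graded I).
Local Notation pi := (\pi_G).

Lemma pi0E (p : rees_algebra I) : (pi p = 0) <-> (p \in @grJ _ I).
Proof.
have -> : (0 : G) = pi 0 by rewrite raddf0.
split.
  by move=> h; rewrite -[p]subr0 Quotient.idealrBE; apply/eqP.
by move=> h; apply/eqmodP; rewrite /= Quotient.equivE subr0.
Qed.

Lemma piM (p q : rees_algebra I) : pi (p * q) = pi p * pi q.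
Proof. exact: gr_pi_mul. Qed.

Lemma piB (p q : rees_algebra I) : pi (p - q) = pi p - pi q.
Proof. by rewrite raddfB. Qed.
End G.

Theorem corollary3p4 (R : comNzRingType) (m I : R -> Prop) (r : nat)
  (hR : gorenstein_zero_dim_local m)
  (hI : is_ideal I) (hIm : forall x, I x -> m x)
  (hr : exists x, idealpow I r x /\ x <> 0)
  (hr1 : forall x, idealpow I r.+1 x -> x = 0)
  (hG : gorenstein_zero_dim (assoc_graded I)) :
  forall i : nat, (i <= r)%N -> faithful_graded_piece I i.
Proof.
move=> i ir a H; apply: NNPP => nIa.
have top j x : idealpow I j x -> (r < j)%N -> x = 0.
  by move=> hx hj; apply: hr1; apply: idealpow_mono hx hj.
have aIr x : idealpow I r x -> a * x = 0.
  move=> hx; apply: hr1; apply: (hx (fun x => idealpow I r.+1 (a * x))); first split.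
  - by rewrite mulr0; apply: idealpow_0.
  - by move=> u v hu hv; rewrite mulrDr; apply: idealpowD.
  - by move=> c u hu; rewrite mulrCA; case: (idealpow_ideal I r.+1) => _ _; apply.
  move=> y; rewrite -(subnKC ir) => /prods_split [y1 [y2 [h1 h2 ->]]].
  rewrite mulrA -addSn; apply: idealpowM; first by apply: H; apply: prods_in.
  exact: prods_in.
have [w [hw w0]] := hr.
have Amem : a%:P \in reesP I.
  apply/asboolP => j; rewrite coefC; case: j => [|j] /=; first exact: idealpow0.
  exact: idealpow_0.
have Tmem : (w%:P * 'X^r) \in reesP I.
  apply/asboolP => j; rewrite coefCM coefXn; case: eqP => [->|_].
    by rewrite mulr1.
  by rewrite mulr0; apply: idealpow_0.
pose A := ReesElt Amem.
pose T := ReesElt Tmem.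
pose G := assoc_graded I.
have a0 : (\pi_G A) <> 0.
  move/pi0E/asboolP => /(_ 0%N); rewrite /= coefC /= => /idealpow1I.
  by move=> h; apply: nIa; apply: h.
have t0 : (\pi_G T) <> 0.
  move/pi0E/asboolP => /(_ r); rewrite /= coefCM coefXn eqxx mulr1 => /hr1.
  exact: w0.
have [m' [hN hZ hL hS]] := hG.
have [g1 [s1 s10]] := @socle_in _ m' hN hZ hL _ t0.
have [g2 [s2 s20]] := @socle_in _ m' hN hZ hL _ a0.
have [c ec] := hS.2 _ _ s2 s1 s20.
move: ec s10; rewrite mulrA -[g1]reprK -[c * g2]reprK -!piM.
set P1 := repr g1; set P2 := repr (c * g2).
move=> e; have := f_equal (fun z => z - \pi_G (P2 * A)) e; rewrite subrr -piB.
move/pi0E/asboolP => /(_ r) /=.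
have /asboolP hP1 := rees_valP P1.
have /asboolP hP2 := rees_valP P2.
rewrite coefB mulrA coefMXn ltnn subnn !coefMC (mulrC _ a) aIr // subr0 => /hr1 h.
apply; apply/pi0E/asboolP => j /=.
rewrite mulrA coefMXn coefMC; case: ltnP => hj; first exact: idealpow_0.
case: (ltngtP r j) hj => // [rj _|<- _]; last by rewrite subnn h; apply: idealpow_0.
rewrite (top j ((rees_val P1)`_(j - r) * w)); first exact: idealpow_0.
  by have := idealpowM (hP1 (j - r)%N) hw; rewrite subnK // ltnW.
exact: rj.
Qed.
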